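(* Let $f_1,\dots,f_n$ be monotone linear functions and $\sigma$ a permutation of $[n]$. Then $f^\sigma<\min\{f^{\sigma_1},f^{\sigma_{n-1}}\}\ \Rightarrow\ \theta(f^\sigma)+\pi\in(\theta(f_{\sigma(n)}),\theta(f_{\sigma(1)}))_{2\pi}$, and $f^\sigma>\max\{f^{\sigma_1},f^{\sigma_{n-1}}\}\ \Rightarrow\ \theta(f^\sigma)\in(\theta(f_{\sigma(n)}),\theta(f_{\sigma(1)}))_{2\pi}$.
   Context: A linear function is $f(x)=ax+b$; monotone means $a>0$. $\vec f=(b,1-a)^\top$ and $\theta(f)\in[0,2\pi)$ is its polar angle ($\bot$ if $\vec f=0$). $(\theta_1,\theta_2)_{2\pi}=\{\theta\in(\lambda_1,\lambda_2)\mid\lambda_1-\theta_1,\lambda_2-\theta_2\in2\pi\mathbb{Z},\ \lambda_2-\lambda_1\in[0,2\pi)\}$, membership being taken modulo $2\pi$. For a permutation $\sigma$ of $[n]$, $f^\sigma=f_{\sigma(n)}\circ\cdots\circ f_{\sigma(1)}$; for $k\in\{0,\dots,n-1\}$ the $k$-shift $\sigma_k$ is defined by $\sigma_k(i)=\sigma(i+k)$ for $i\le n-k$ and $\sigma_k(i)=\sigma(i+k-n)$ for $i>n-k$, so that $f^{\sigma_k}=f_{\sigma(k)}\circ\cdots\circ f_{\sigma(1)}\circ f_{\sigma(n)}\circ\cdots\circ f_{\sigma(k+1)}$. Inequalities between functions are pointwise (for all $x$). *)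

(* Defs.v *)
From mathcomp Require Import all_boot all_order all_algebra all_fingroup.
From mathcomp Require Import all_classical all_reals.
From mathcomp Require Import trigo.
Set Implicit Arguments. Unset Strict Implicit. Unset Printing Implicit Defensive.
Import Order.TTheory GRing.Theory Num.Theory.
Local Open Scope ring_scope.

Section Defs.
Variable R : realType.

Definition lapp (f : R * R) (x : R) : R := f.1 * x + f.2.

Definition lcomp (g h : R * R) : R * R := (g.1 * h.1, g.1 * h.2 + g.2).

Definition monotone_lin (f : R * R) : Prop := 0 < f.1.

(* composite of a list of linear functions, the head being applied first *)
Definition lcomp_seq (s : seq (R * R)) : R * R :=
  foldl (fun acc p => lcomp p acc) (1, 0) s.

(* f^tau = f_{tau(n)} \o ... \o f_{tau(1)} (0-based indices here) *)
Definition fperm n (f : 'I_n -> R * R) (tau : 'I_n -> 'I_n) : R * R :=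
  lcomp_seq [seq f (tau i) | i <- enum 'I_n].

(* the k-shift: sigma_k(i) = sigma(i + k mod n) *)
Definition shift_ord n (k : nat) (i : 'I_n) : 'I_n :=
  Ordinal (ltn_pmod (i + k) (leq_ltn_trans (leq0n i) (ltn_ord i))).

Definition kshift n (sigma : 'I_n -> 'I_n) (k : nat) : 'I_n -> 'I_n :=
  fun i => sigma (shift_ord k i).

Definition fvec (f : R * R) : R * R := (f.2, 1 - f.1).

(* polar angle in [0, 2pi); None plays the role of "bottom" for the zero vector *)
Definition theta (f : R * R) : option R :=
  let v := fvec f in
  if (v.1 == 0) && (v.2 == 0) then None
  else Some (xget (0 : R) [set t : R | 0 <= t < pi *+ 2 /\
                   v.1 = Num.sqrt (v.1 ^+ 2 + v.2 ^+ 2) * cos t /\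
                   v.2 = Num.sqrt (v.1 ^+ 2 + v.2 ^+ 2) * sin t]).

Definition in_arc (t t1 t2 : R) : Prop :=
  exists (z1 z2 z : int),
    let l1 := t1 + z1%:~R * (pi *+ 2) in
    let l2 := t2 + z2%:~R * (pi *+ 2) in
    let l := t + z%:~R * (pi *+ 2) in
    0 <= l2 - l1 < pi *+ 2 /\ l1 < l < l2.

End Defs.

(* Main.v *)
Require Import Defs.
From mathcomp Require Import all_boot all_order all_algebra all_fingroup.
From mathcomp Require Import all_classical all_reals.
From mathcomp Require Import trigo.
From mathcomp Require Import ring lra zify.
Import Order.TTheory GRing.Theory Num.Theory.
Local Open Scope ring_scope.

Section Angles.
Variable R : realType.

Lemma sin_pos_range (e : R) : 0 <= e < pi *+ 2 -> 0 < sin e -> 0 < e < pi.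
Proof.
move=> /andP[e0 e2] se.
have pi0 := @pi_gt0 R.
have ne0 : e != 0 by apply/eqP => E; move: se; rewrite E sin0 ltxx.
case: (ltP e pi) => ep.
  by rewrite andbT lt_def ne0.
exfalso.
have : 0 <= sin (e - pi) by apply: sin_ge0_pi; apply/andP; split; rewrite -?mulr2n; lra.
have := sinDpi (e - pi); rewrite subrK => E; lra.
Qed.

Lemma arc1 (d : R) : -(pi *+ 4) < d < pi *+ 4 -> 0 < sin d ->
  exists z : int, 0 < d + z%:~R * (pi *+ 2) < pi.
Proof.
move=> /andP[d1 d2] sd.
have pi0 := @pi_gt0 R.
have P2 x : sin (x + pi *+ 2) = sin x by exact: sinD2pi.
case: (ltP d (pi *+ 2)) => h1.
  case: (leP 0 d) => h0.
    exists 0; rewrite mulr0z mul0r addr0; apply: sin_pos_range => //.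
    by rewrite h0 h1.
  case: (leP (- (pi *+ 2)) d) => h3.
    exists 1; rewrite mul1r; apply: sin_pos_range; last by rewrite P2.
    apply/andP; split; rewrite -?mulr2n; lra.
  exists 2; rewrite -[2%:~R]/(2%:R) mulr2n mulrDl mul1r addrA.
  apply: sin_pos_range; last by rewrite !P2.
  apply/andP; split; rewrite -?mulr2n; lra.
exists (-1); rewrite mulrN1z mulN1r.
apply: sin_pos_range; last by rewrite -P2 subrK.
apply/andP; split; rewrite -?mulr2n; lra.
Qed.

Lemma arc_in (t t1 t2 : R) :
  0 <= t1 < pi *+ 2 -> 0 <= t2 < pi *+ 2 -> -(pi *+ 2) <= t < pi *+ 3 ->
  0 < sin (t - t1) -> 0 < sin (t2 - t) -> in_arc t t1 t2.
Proof.
move=> /andP[a1 a2] /andP[b1 b2] /andP[c1 c2] s1 s2.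
have pi0 := @pi_gt0 R.
have [z hz] : exists z : int, 0 < t - t1 + z%:~R * (pi *+ 2) < pi.
  apply: arc1 s1; apply/andP; split; rewrite -?mulr2n; lra.
have [z' hz'] : exists z : int, 0 < t2 - t + z%:~R * (pi *+ 2) < pi.
  apply: arc1 s2; apply/andP; split; rewrite -?mulr2n; lra.
exists 0, (z + z'), z => /=.
rewrite mul0r addr0 intrD mulrDl.
move: hz hz'; set A := z%:~R * _; set B := z'%:~R * _ => /andP[h1 h2] /andP[h3 h4].

repeat (apply/andP; split); lra.
Qed.

Lemma sumsq_gt0 (x y : R) : ~~ ((x == 0) && (y == 0)) -> 0 < x ^+ 2 + y ^+ 2.
Proof. by move=> nz; rewrite lt_def paddr_eq0 ?sqr_ge0 // !sqrf_eq0 nz addr_ge0 ?sqr_ge0. Qed.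

Lemma polar (x y : R) : ~~ ((x == 0) && (y == 0)) ->
  exists t, 0 <= t < pi *+ 2 /\
    x = Num.sqrt (x ^+ 2 + y ^+ 2) * cos t /\
    y = Num.sqrt (x ^+ 2 + y ^+ 2) * sin t.
Proof.
move=> nz.
have pi0 := @pi_gt0 R.
set r := Num.sqrt _.
have q0 : 0 < x ^+ 2 + y ^+ 2.
  by rewrite lt_def paddr_eq0 ?sqr_ge0 // !sqrf_eq0 nz addr_ge0 ?sqr_ge0.
have r0 : 0 < r by rewrite sqrtr_gt0.
have rn0 : r != 0 by rewrite gt_eqF.
have r2 : r ^+ 2 = x ^+ 2 + y ^+ 2 by rewrite sqr_sqrtr // ltW.
set u := x / r.
have xr : -r <= x <= r by apply/andP; split; nra.
have hu : -1 <= u <= 1.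
  by rewrite /u ler_pdivrMr // ler_pdivlMr // mul1r mulN1r.
have cu : cos (acos u) = u by apply: acosK; rewrite in_itv /= hu.
have su : sin (acos u) = `|y| / r.
  rewrite sin_acos // -(gtr0_norm r0) -normf_div -sqrtr_sqr; congr Num.sqrt.
  rewrite /u !expr_div_n r2; field; by rewrite gt_eqF.
have a0 := acos_ge0 hu; have api := acos_lepi hu.
case: (leP 0 y) => y0.
  exists (acos u); split; first by apply/andP; split; lra.
  by rewrite cu su (ger0_norm y0) /u !(mulrC r) !divfK.
have a1 : 0 < acos u.
  apply: acos_gt0; rewrite (andP hu).1 /= lt_neqAle (andP hu).2 andbT.
  apply/eqP => u1; have xr' : x = r by rewrite -[x](divfK rn0) -/u u1 mul1r.
  nra.
exists (- acos u + pi *+ 2); split; first by apply/andP; split; lra.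
rewrite cosD2pi sinD2pi cosN sinN cu su (ltr0_norm y0) /u !(mulrC r) divfK //.
by rewrite mulNr divfK // opprK.
Qed.

Lemma theta_spec (F : R * R) : ~~ (((fvec F).1 == 0) && ((fvec F).2 == 0)) ->
  exists t, theta F = Some t /\ 0 <= t < pi *+ 2 /\
    (fvec F).1 = Num.sqrt ((fvec F).1 ^+ 2 + (fvec F).2 ^+ 2) * cos t /\
    (fvec F).2 = Num.sqrt ((fvec F).1 ^+ 2 + (fvec F).2 ^+ 2) * sin t.
Proof.
move=> nz; rewrite /theta (negbTE nz).
eexists; split; first reflexivity.
have := xgetPex 0 (polar _ _ nz).
move=> [/andP[h1 h2] [h3 h4]]; split; [by rewrite h1 h2|by split].
Qed.

End Angles.

Section Comp.
Variable R : realType.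
Implicit Types (g h x : R * R).

Lemma foldl_lcomp (l : seq (R * R)) x :
  foldl (fun acc p => lcomp p acc) x l = lcomp (lcomp_seq l) x.
Proof.
elim: l x => [|a l IH] x /=.
  by case: x => x1 x2; rewrite /lcomp /lcomp_seq /=; congr pair; ring.
rewrite /lcomp_seq /= !IH -/(lcomp_seq l).
case: x => x1 x2; case: a => a1 a2; case: (lcomp_seq l) => b1 b2.
rewrite /lcomp /=; congr pair; ring.
Qed.

Lemma lcomp_seq_cat (l1 l2 : seq (R * R)) :
  lcomp_seq (l1 ++ l2) = lcomp (lcomp_seq l2) (lcomp_seq l1).
Proof. by rewrite {1}/lcomp_seq foldl_cat foldl_lcomp. Qed.

Lemma lcomp_seq1 h : lcomp_seq [:: h] = h.
Proof. by case: h => a b; rewrite /lcomp_seq /lcomp /=; congr pair; ring. Qed.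

Lemma shift_rot N k : (k <= N)%N ->
  map (@shift_ord N k) (enum 'I_N) = rot k (enum 'I_N).
Proof.
move=> kN; apply: (inj_map val_inj).
rewrite map_rot -map_comp val_enum_ord.
rewrite (eq_map (_ : _ =1 (fun j => (j + k) %% N)%N \o val)) // map_comp val_enum_ord.
rewrite /rot drop_iota take_iota add0n (minn_idPl kN).
apply: (@eq_from_nth _ 0%N); first by rewrite size_map size_cat !size_iota; lia.
rewrite size_map size_iota => i iN.
rewrite (nth_map 0%N) ?size_iota // nth_iota // add0n nth_cat size_iota.
case: ltnP => h.
  rewrite nth_iota // modn_small //; lia.
rewrite nth_iota; last by lia.
have -> : (i + k = (i + k - N) + N)%N by lia.
rewrite modnDr modn_small; lia.
Qed.

Lemma decomp m (f : 'I_m.+2 -> R * R) (s : 'I_m.+2 -> 'I_m.+2) :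
  exists W V,
    [/\ fperm f s = lcomp W (f (s ord0)),
        fperm f (kshift s 1) = lcomp (f (s ord0)) W,
        fperm f s = lcomp (f (s ord_max)) V &
        fperm f (kshift s m.+1) = lcomp V (f (s ord_max))].
Proof.
set l := [seq f (s i) | i <- enum 'I_m.+2].
have rk k : (k <= m.+2)%N -> fperm f (kshift s k) = lcomp_seq (rot k l).
  move=> kN; rewrite /fperm /kshift.
  rewrite (eq_map (_ : _ =1 (fun i => f (s i)) \o (@shift_ord m.+2 k))) //.
  by rewrite map_comp shift_rot // map_rot.
have l1 : l = f (s ord0) :: behead l by rewrite /l enum_ordSl.
set l' := [seq f (s (widen_ord (leqnSn m.+1) i)) | i <- enum 'I_m.+1].
have l2 : l = rcons l' (f (s ord_max)) by rewrite /l enum_ordSr map_rcons -map_comp.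
exists (lcomp_seq (behead l)), (lcomp_seq l'); split.
- by rewrite /fperm -/l l1 -cat1s lcomp_seq_cat lcomp_seq1.
- by rewrite rk // l1 rot1_cons -cats1 lcomp_seq_cat lcomp_seq1.
- by rewrite /fperm -/l l2 -cats1 lcomp_seq_cat lcomp_seq1.
- rewrite rk //.
  have -> : rot m.+1 l = rotr 1 l by rewrite /rotr size_map size_enum_ord subn1.
  by rewrite l2 rotr1_rcons -cat1s lcomp_seq_cat lcomp_seq1.
Qed.

End Comp.

Section Main.
Variable R : realType.

Definition cross (u v : R * R) := u.1 * v.2 - u.2 * v.1.

Lemma cross_sin (x1 y1 x2 y2 r1 r2 a b : R) :
  x1 = r1 * cos a -> y1 = r1 * sin a -> x2 = r2 * cos b -> y2 = r2 * sin b ->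
  x1 * y2 - y1 * x2 = r1 * r2 * sin (b - a).
Proof. move=> -> -> -> ->; rewrite sinB; ring. Qed.

Lemma nzvec (u v : R * R) : cross u v != 0 -> ~~ ((u.1 == 0) && (u.2 == 0)) /\ ~~ ((v.1 == 0) && (v.2 == 0)).
Proof.
move=> c; split; apply/negP => /andP[/eqP a /eqP b]; move: c; rewrite /cross a b; 
  by rewrite ?mul0r ?mulr0 ?subrr ?eqxx.
Qed.

Lemma angles (g P h : R * R) :
  cross (fvec g) (fvec P) != 0 -> cross (fvec P) (fvec h) != 0 ->
  exists t t1 t2 rg rP rh,
    [/\ [/\ theta P = Some t, theta g = Some t1 & theta h = Some t2],
        [/\ 0 <= t < pi *+ 2, 0 <= t1 < pi *+ 2 & 0 <= t2 < pi *+ 2],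
        [/\ 0 < rg, 0 < rP & 0 < rh] &
        cross (fvec g) (fvec P) = rg * rP * sin (t - t1) /\
        cross (fvec P) (fvec h) = rP * rh * sin (t2 - t)].
Proof.
move=> /nzvec [ng nP] /nzvec [_ nh].
have [t [E [rt [x1 y1]]]] := @theta_spec R _ nP.
have [t1 [E1 [rt1 [x2 y2]]]] := @theta_spec R _ ng.
have [t2 [E2 [rt2 [x3 y3]]]] := @theta_spec R _ nh.
pose r (F : R * R) := Num.sqrt ((fvec F).1 ^+ 2 + (fvec F).2 ^+ 2).
exists t, t1, t2, (r g), (r P), (r h); split; [by split|by split| |split].
- by split; rewrite sqrtr_gt0 sumsq_gt0.
- exact: cross_sin x2 y2 x1 y1.
- exact: cross_sin x1 y1 x3 y3.
Qed.

Lemma fin_max (g P h : R * R) :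
  0 < cross (fvec g) (fvec P) -> 0 < cross (fvec P) (fvec h) ->
  exists t t1 t2 : R,
     [/\ theta P = Some t, theta g = Some t1, theta h = Some t2 & in_arc t t1 t2].
Proof.
move=> c1 c2.
have [t [t1 [t2 [rg [rP [rh [[E E1 E2] [r1 r2 r3] [p1 p2 p3] [e1 e2]]]]]]]] :=
  angles _ _ _ (negbT (gt_eqF c1)) (negbT (gt_eqF c2)).
exists t, t1, t2; split => //.
have pi0 := @pi_gt0 R.
apply: arc_in => //.
- move: r1 => /andP[? ?]; apply/andP; split; lra.
- by move: c1; rewrite e1 pmulr_rgt0 // mulr_gt0.
- by move: c2; rewrite e2 pmulr_rgt0 // mulr_gt0.
Qed.

Lemma fin_min (g P h : R * R) :
  cross (fvec g) (fvec P) < 0 -> cross (fvec P) (fvec h) < 0 ->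
  exists t t1 t2 : R,
     [/\ theta P = Some t, theta g = Some t1, theta h = Some t2 & in_arc (t + pi) t1 t2].
Proof.
move=> c1 c2.
have [t [t1 [t2 [rg [rP [rh [[E E1 E2] [r1 r2 r3] [p1 p2 p3] [e1 e2]]]]]]]] :=
  angles _ _ _ (negbT (lt_eqF c1)) (negbT (lt_eqF c2)).
exists t, t1, t2; split => //.
have pi0 := @pi_gt0 R.
apply: arc_in => //.
- move: r1 => /andP[? ?]; apply/andP; split; lra.
- have -> : t + pi - t1 = (t - t1) + pi by ring.
  rewrite sinDpi oppr_gt0.
  by move: c1; rewrite e1 pmulr_rlt0 // mulr_gt0.
- have := sinDpi (t2 - t - pi); rewrite subrK => S.
  have -> : t2 - (t + pi) = t2 - t - pi by ring.
  have : sin (t2 - t) < 0 by move: c2; rewrite e2 pmulr_rlt0 // mulr_gt0.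
  lra.
Qed.

End Main.
Arguments cross {R}.

Theorem mainTheorem10 (R : realType) (n : nat) (f : 'I_n.+1 -> R * R)
    (sigma : 'S_n.+1) :
  (forall i, monotone_lin (f i)) ->
  ((forall x : R,
      lapp (fperm f sigma) x <
      Num.min (lapp (fperm f (kshift sigma 1)) x) (lapp (fperm f (kshift sigma n)) x)) ->
   exists t t1 t2 : R,
     [/\ theta (fperm f sigma) = Some t,
         theta (f (sigma ord_max)) = Some t1,
         theta (f (sigma ord0)) = Some t2 &
         in_arc (t + pi) t1 t2])
  /\
  ((forall x : R,
      lapp (fperm f sigma) x >
      Num.max (lapp (fperm f (kshift sigma 1)) x) (lapp (fperm f (kshift sigma n)) x)) ->
   exists t t1 t2 : R,
     [/\ theta (fperm f sigma) = Some t,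
         theta (f (sigma ord_max)) = Some t1,
         theta (f (sigma ord0)) = Some t2 &
         in_arc t t1 t2]).
Proof.
case: n f sigma => [|m] f sigma mono.
  have E : fperm f (kshift sigma 1) = fperm f sigma.
    rewrite /fperm; congr lcomp_seq; apply: eq_map => i.
    by rewrite /kshift (ord1 (shift_ord 1 i)) (ord1 i).
  split => H; have := H 0; rewrite E ?lt_min ?gt_max ltxx //.
have [W [V [E1 E2 E3 E4]]] := @decomp R m f sigma.
set P := fperm f sigma; set h := f (sigma ord0); set g := f (sigma ord_max).
have g0 : 0 < g.1 by apply: mono.
have C2 : cross (fvec P) (fvec h) = lapp P 0 - lapp (fperm f (kshift sigma 1)) 0.
  rewrite /lapp E2 /P E1 /cross /fvec /lcomp /=; ring.
have C1 : cross (fvec g) (fvec P) = g.1 * (lapp P 0 - lapp (fperm f (kshift sigma m.+1)) 0).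
  rewrite /lapp E4 /P E3 /cross /fvec /lcomp /=; ring.
split => H; have := H 0; rewrite ?lt_min ?gt_max => /andP[h1 h2].
  apply: fin_min.
  + by rewrite C1 pmulr_rlt0 // subr_lt0.
  + by rewrite C2 subr_lt0.
apply: fin_max.
+ by rewrite C1 pmulr_rgt0 // subr_gt0.
+ by rewrite C2 subr_gt0.
Qed.
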